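(* Let $q=p^r\ge 3$ and let $h,\bar h,t\in\mathbb{F}_q[x]$ be $$h(x)=\sum_{k=0}^{q-3}(k+1)x^k,\qquad \bar h(x)=1+x+\sum_{k=0}^{q-2}(-k)x^k,\qquad t(x)=x+\sum_{k=0}^{q-2}x^k .$$ Then: (1) $h(x^{q-2})\equiv \bar h(x) \pmod{x^q-x}$; (2) $\bar h(t(x))\equiv \bar h(x)\pmod{x^q-x}$.
   Context: $\mathbb{F}_q$ is the finite field with $q=p^r$ elements, $p$ prime. The integer coefficients $k+1$ and $-k$ are read in $\mathbb{F}_q$. Congruence modulo $x^q-x$ means the two polynomials induce the same function $\mathbb{F}_q\to\mathbb{F}_q$. *)

(* Defs.v *)
From HB Require Import structures.
From mathcomp Require Import all_boot all_order all_algebra all_field.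
Set Implicit Arguments. Unset Strict Implicit. Unset Printing Implicit Defensive.
Import GRing.Theory.
Local Open Scope ring_scope.

(* Congruence modulo x^q - x over F_q (q = #|F|): the two polynomials
   induce the same function F -> F. *)
Definition congr_xqx (F : finFieldType) (P Q : {poly F}) : Prop :=
  forall a : F, P.[a] = Q.[a].

Definition hpoly (F : finFieldType) : {poly F} :=
  \sum_(k < #|F| - 2) (k.+1)%:R *: 'X^k.

Definition hbarpoly (F : finFieldType) : {poly F} :=
  1 + 'X + \sum_(k < #|F| - 1) (- (k%:R)) *: 'X^k.

Definition tpoly (F : finFieldType) : {poly F} :=
  'X + \sum_(k < #|F| - 1) 'X^k.

(* Main.v *)
Require Import Defs.
From HB Require Import structures.
From mathcomp Require Import all_boot all_order all_algebra all_field.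
Import GRing.Theory.
Local Open Scope ring_scope.
From mathcomp Require Import ring.

Section Aux.
Variable F : finFieldType.

Lemma geoG (a : F) n : (1 - a) * \sum_(k < n) a ^+ k = 1 - a ^+ n.
Proof.
elim: n => [|n IH]; first by rewrite big_ord0 expr0 mulr0 subrr.
rewrite big_ord_recr /= mulrDr IH exprSr; ring.
Qed.

Lemma geoS (a : F) n : (1 - a) * \sum_(k < n) (k%:R * a ^+ k) =
  \sum_(k < n) a ^+ k - 1 + a ^+ n - n%:R * a ^+ n.
Proof.
elim: n => [|n IH]; first by rewrite !big_ord0 expr0 mulr0 mulr0n mul0r; ring.
rewrite !big_ord_recr /= mulrDr IH exprSr -natr1; ring.
Qed.

Lemma cardpow : {p : nat & {m : nat | prime p /\ p \in [char F]%R /\ #|F| = (p ^ m.+1)%N}}.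
Proof.
have [p pp pc] := finPcharP F.
have := card_pprimeChar pc; rewrite /= => E.
exists p; move: E; case: (logn _ _) => [|m] E.
  by have := finNzRing_gt1 F; rewrite E.
by exists m.
Qed.

Lemma card0 : (#|F|%:R : F) = 0.
Proof.
have [p [m [pp [pc ->]]]] := cardpow.
by rewrite natrX (pcharf0 pc) expr0n.
Qed.
Hypothesis hq : (3 <= #|F|)%N.
Lemma dvd_bin2 : exists2 p, p \in [char F]%R & (p %| 'C(#|F|, 2))%N.
Proof.
have [p [m [pp [pc E]]]] := cardpow.
exists p => //; rewrite E.
have [p2e|p2] := eqVneq p 2%N.
  rewrite p2e in E *; rewrite bin2 expnS -mulnA mul2n doubleK.
  case: m E => [|m] E.
    by move: hq; rewrite E.
  by rewrite expnS -mulnA dvdn_mulr.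
have op : odd p.
  by case/even_prime: pp => // e; rewrite e eqxx in p2.
rewrite bin2odd ?oddX ?op ?orbT //.
by rewrite expnS -mulnA dvdn_mulr.
Qed.

Lemma sumk1 : \sum_(k < #|F|.-1) (k%:R : F) = 1.
Proof.
have [p pc dv] := dvd_bin2.
rewrite -natr_sum -(big_mkord xpredT (fun k => k)) bin2_sum.
have q1 : #|F| = (#|F|.-1).+1 by rewrite prednK // ltnW // ltnW.
have : ('C(#|F|,2)%:R : F) = 0.
  by case/dvdnP: dv => k ->; rewrite natrM (pcharf0 pc) mulr0.
rewrite {1}q1 binS bin1 natrD => /eqP; rewrite addr_eq0 => /eqP ->.
have := card0; rewrite {1}q1 -addn1 natrD => /eqP; rewrite addr_eq0 => /eqP ->.
by rewrite opprK.
Qed.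
Let n := #|F|.-1.
Lemma n_def : #|F| = n.+1. Proof. by rewrite /n prednK // ltnW // ltnW. Qed.
Lemma n1 : (n%:R : F) = -1.
Proof. by apply/eqP; rewrite -addr_eq0 natr1 -n_def card0. Qed.

Lemma expn1 (a : F) : a != 0 -> a ^+ n = 1.
Proof.
move=> a0; apply: (mulfI a0); rewrite mulr1 -exprS -n_def; exact: expf_card.
Qed.

Lemma Gval (a : F) : a != 0 -> a != 1 -> \sum_(k < n) a ^+ k = 0.
Proof.
move=> a0 a1; have := geoG a n; rewrite expn1 // subrr => /eqP.
by rewrite mulf_eq0 subr_eq0 eq_sym (negbTE a1) => /eqP.
Qed.

Lemma Sval (a : F) : a != 0 -> a != 1 -> \sum_(k < n) (k%:R * a ^+ k) = (1 - a)^-1.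
Proof.
move=> a0 a1; have := geoS a n; rewrite expn1 // Gval // n1.
have h1 : 1 - a != 0 by rewrite subr_eq0 eq_sym.
move=> E; apply: (mulfI h1); rewrite E divff //; ring.
Qed.

Lemma G0 : \sum_(k < n) (0 : F) ^+ k = 1.
Proof.
have : (0 < n)%N by rewrite /n -ltnS -n_def ltnW.
case: n => // m _; rewrite big_ord_recl expr0 big1 ?addr0 // => i _.
by rewrite expr0n.
Qed.

Lemma S0 : \sum_(k < n) ((k%:R : F) * 0 ^+ k) = 0.
Proof. by rewrite big1 // => [[[|k] ?]] _; rewrite ?mul0r // expr0n mulr0. Qed.

Lemma hbarE (a : F) : (hbarpoly F).[a] = 1 + a - \sum_(k < n) (k%:R * a ^+ k).
Proof.
rewrite /hbarpoly subn1 -/n !hornerE horner_sum -sumrN; congr (_ + _).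
by apply: eq_bigr => i _; rewrite hornerZ hornerXn mulNr.
Qed.

Lemma hE (b : F) : (hpoly F).[b] = \sum_(k < n.-1) ((k.+1)%:R * b ^+ k).
Proof.
rewrite /hpoly (_ : (#|F| - 2 = n.-1)%N); last by rewrite n_def subSS subn1.
rewrite horner_sum.
by apply: eq_bigr => i _; rewrite hornerZ hornerXn.
Qed.

Lemma tE (a : F) : (tpoly F).[a] = a + \sum_(k < n) a ^+ k.
Proof.
rewrite /tpoly subn1 -/n !hornerE horner_sum; congr (_ + _).
by apply: eq_bigr => i _; rewrite hornerXn.
Qed.

Lemma hbar0 : (hbarpoly F).[0] = 1.
Proof. by rewrite hbarE S0 !subr0 addr0. Qed.

Lemma hbar1 : (hbarpoly F).[1] = 1.
Proof.
rewrite hbarE (eq_bigr (fun k : 'I_n => (k%:R : F))) ?sumk1; last first.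
  by move=> i _; rewrite expr1n mulr1.
by rewrite addrK.
Qed.
Lemma shiftS (b : F) m : b * \sum_(k < m) ((k.+1)%:R * b ^+ k) = \sum_(k < m.+1) (k%:R * b ^+ k).
Proof.
rewrite big_ord_recl mul0r add0r mulr_sumr; apply: eq_bigr => i _.
rewrite /= exprS /bump leq0n add1n; ring.
Qed.

Lemma n2 : (1 < n)%N. Proof. by rewrite /n -ltnS -n_def. Qed.
Lemma nP : n = (n.-1).+1. Proof. by rewrite prednK // ltnW // n2. Qed.

Lemma part1 (a : F) : (hpoly F \Po 'X^(#|F| - 2)).[a] = (hbarpoly F).[a].
Proof.
rewrite horner_comp hornerXn hE.
have e2 : (#|F| - 2 = n.-1)%N by rewrite n_def subSS subn1.
rewrite e2.
have [->|a0] := eqVneq a 0.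
  rewrite hbar0.
  case En: n.-1 => [|m]; first by move: n2; rewrite nP En.
  rewrite expr0n /= big_ord_recl expr0 mulr1 big1 ?addr0 // => i _.
  by rewrite expr0n mulr0.
have [->|a1] := eqVneq a 1.
  have := shiftS 1 n.-1; rewrite -nP mul1r => E.
  transitivity (\sum_(k < n) (k%:R : F) * 1 ^+ k).
    by rewrite -E; apply: eq_bigr => i _; rewrite !expr1n.
  by rewrite hbar1 -[RHS]sumk1; apply: eq_bigr => i _; rewrite expr1n mulr1.
set b := a ^+ n.-1.
have ab : a * b = 1 by rewrite /b -exprS -nP expn1.
have Hb : b = a^-1 by apply: (mulfI a0); rewrite ab mulfV.
have b0 : b != 0 by rewrite Hb invr_eq0.
have b1 : b != 1 by apply/eqP => e; move: a1; rewrite -ab e mulr1 eqxx.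
have := shiftS b n.-1; rewrite -nP Sval // => E.
have -> : \sum_(k < n.-1) (k.+1)%:R * b ^+ k = a * (1 - b)^-1.
  by rewrite -E mulrA ab mul1r.
rewrite hbarE Sval // Hb.
have h1 : 1 - a != 0 by rewrite subr_eq0 eq_sym.
have h2 : a - 1 != 0 by rewrite subr_eq0.
field; rewrite ?h1 ?h2 ?a0 //.
Qed.
Lemma part2 (a : F) : (hbarpoly F \Po tpoly F).[a] = (hbarpoly F).[a].
Proof.
rewrite horner_comp tE.
have [->|a0] := eqVneq a 0; first by rewrite G0 add0r hbar1 hbar0.
have [->|a1] := eqVneq a 1.
  rewrite (eq_bigr (fun _ => 1)); last by move=> i _; rewrite expr1n.
  by rewrite sumr_const card_ord n1 subrr hbar0 hbar1.
by rewrite Gval // addr0.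
Qed.
End Aux.

Theorem mainTheorem1 (F : finFieldType) (hq : (3 <= #|F|)%N) :
  congr_xqx (hpoly F \Po 'X^(#|F| - 2)) (hbarpoly F) /\
  congr_xqx (hbarpoly F \Po tpoly F) (hbarpoly F).
Proof. by split => a; [exact: part1 | exact: part2]. Qed.
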